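(* Let $a,b,c$ be non-constant polynomials in $\mathbb{F}_2[t]$ and let $\boldsymbol{\varepsilon}=(a,b,c)^\infty$, i.e. $\varepsilon_{3m}=a$, $\varepsilon_{3m+1}=b$, $\varepsilon_{3m+2}=c$ for $m\geq 0$. Let $\beta=1/CF(\mathbf{s}(\boldsymbol{\varepsilon}))$. Then $$\beta^8=A+B_0\beta+B_1\beta^2+B_2\beta^4,$$ where $A,B_0,B_1,B_2\in\mathbb{F}_2[t]$ are $$A=a^3b^2c + a^2b^2c^2 + ab^3c^2 + b^4c^2 + ab^2c^3 + abc^4 + a^2bc + ab^2c + abc^2 + c^4 + 1,$$ $$B_0= a^4b^2c + a^3b^2c^2 + a^2b^3c^2 + ab^4c^2 + a^2b^2c^3 + a^2bc^4,$$ $$B_1=a^3b^2c + a^2b^2c^2 + ab^3c^2 + a^2bc^3,$$ $$B_2=a^2bc + ab^2c + abc^2.$$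
   Context: Given a sequence $\boldsymbol{\varepsilon}=(\varepsilon_n)_{n\geq 0}$, define words $W_0=$ empty word and $W_{n+1}=W_n\,\varepsilon_n\,W_n$ (concatenation) for $n\geq 0$; $\mathbf{s}(\boldsymbol{\varepsilon})=(s_i)_{i\geq 0}$ is the infinite word beginning with every $W_n$, i.e. $\varepsilon_0\varepsilon_1\varepsilon_0\varepsilon_2\varepsilon_0\varepsilon_1\varepsilon_0\varepsilon_3\cdots$. $CF(\mathbf{s}(\boldsymbol{\varepsilon}))=[s_0,s_1,\dots]=s_0+1/(s_1+1/(s_2+\cdots))$ is the infinite continued fraction in $\mathbb{F}_2((1/t))$ with these partial quotients. *)

(* Defs.v *)
(* The field F_2((1/t)) of formal Laurent series in 1/t over F_2
   is modelled by coefficient functions  int -> 'F_2  (f k = coefficient of t^k)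
   whose support is bounded above. *)
From mathcomp Require Import all_boot all_algebra.
From Stdlib Require Import ClassicalEpsilon.
Set Implicit Arguments. Unset Strict Implicit. Unset Printing Implicit Defensive.
Import GRing.Theory Num.Theory.
Local Open Scope ring_scope.

Definition F2 := 'F_2.
Definition laurent := int -> F2.

Definition is_laurent (f : laurent) : Prop := exists N : int, forall k : int, N < k -> f k = 0.

(* some upper bound of the support (any valid bound gives the same products) *)
Definition bnd (f : laurent) : int :=
  epsilon (inhabits 0%R) (fun N : int => forall k : int, N < k -> f k = 0).

Definition lzero : laurent := fun _ => 0.
Definition lone : laurent := fun k => if k == 0 then 1 else 0.
Definition ladd (f g : laurent) : laurent := fun k => f k + g k.

(* Cauchy product: coefficient of t^k is sum_{i + j = k} f_i g_j *)
Definition lmul (f g : laurent) : laurent := fun k =>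
  match bnd f + bnd g - k with
  | Posz m => \sum_(j < m.+1) f (k - bnd g + (j : nat)%:Z) * g (bnd g - (j : nat)%:Z)
  | Negz _ => 0
  end.

Fixpoint lexp (f : laurent) (n : nat) : laurent :=
  match n with 0%N => lone | n'.+1 => lmul f (lexp f n') end.

(* multiplicative inverse: the Laurent series y with f * y = 1 (0 if none) *)
Definition linv (f : laurent) : laurent :=
  epsilon (inhabits lzero) (fun y => is_laurent y /\ lmul f y = lone).

Definition lpoly (p : {poly F2}) : laurent := fun k =>
  match k with Posz n => p`_n | Negz _ => 0 end.

(* convergence for the (1/t)-adic absolute value |f| = 2^(deg f):
   u_n -> x iff for every M the coefficients of t^k, k >= M, eventually agree *)
Definition lcvg (u : nat -> laurent) (x : laurent) : Prop :=
  forall M : int, exists n0 : nat, forall n : nat, (n0 <= n)%N ->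
    forall k : int, M <= k -> u n k = x k.

Definition cf_fin (s : nat -> laurent) (n : nat) : laurent :=
  foldr (fun a acc => ladd a (linv acc)) (s n) [seq s i | i <- iota 0 n].

Fixpoint Wword (T : Type) (eps : nat -> T) (n : nat) : seq T :=
  match n with
  | 0%N => [::]
  | n'.+1 => Wword eps n' ++ eps n' :: Wword eps n'
  end.

(* s(eps): the infinite word beginning with every W_n; W_{i+1} has length 2^(i+1)-1 > i *)
Definition sword (T : Type) (x0 : T) (eps : nat -> T) (i : nat) : T :=
  nth x0 (Wword eps i.+1) i.

Definition eps3 (T : Type) (a b c : T) (n : nat) : T :=
  if (n %% 3 == 0)%N then a else if (n %% 3 == 1)%N then b else c.

(* Main.v *)
From HB Require Import structures.
Require Import Defs.
From mathcomp Require Import all_boot all_algebra.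
From mathcomp Require Import boolp.
From mathcomp Require Import ring zify.
From Stdlib Require Import ClassicalEpsilon FunctionalExtensionality.
Set Implicit Arguments. Unset Strict Implicit. Unset Printing Implicit Defensive.
Import GRing.Theory Num.Theory.
Local Open Scope ring_scope.

Lemma two0 : (2%:R : F2) = 0. Proof. by apply/eqP. Qed.
Lemma addxx (x : F2) : x + x = 0. Proof. by rewrite -mulr2n -mulr_natr two0 mulr0. Qed.

Definition vanish (f : laurent) (N : int) := forall k : int, N < k -> f k = 0.

Lemma bndP f : is_laurent f -> vanish f (bnd f).
Proof. move=> H; rewrite /bnd; exact: (epsilon_spec (inhabits 0) _ H). Qed.

Lemma vanish_le f N M : vanish f N -> N <= M -> vanish f M.
Proof. move=> H NM k Mk; apply: H; lia. Qed.

Lemma vanish_laurent f N : vanish f N -> is_laurent f.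
Proof. by exists N. Qed.

Definition wsum (h : int -> F2) (b : int) (n : nat) : F2 :=
  \sum_(j < n) h (b + (j : nat)%:Z).

Definition supp (h : int -> F2) (b : int) (n : nat) :=
  forall i, (i < b) || (b + n%:Z <= i) -> h i = 0.

Lemma wsum_ext0 h b n d e : supp h b n ->
  wsum h (b - d%:Z) (d + n + e) = wsum h b n.
Proof.
move=> S; rewrite /wsum big_split_ord /=.
rewrite [X in _ + X]big1 ?addr0; last first.
  move=> i _; apply: S; apply/orP; right; rewrite /=; lia.
rewrite big_split_ord /= big1 ?add0r; last first.
  move=> i _; apply: S; apply/orP; left; have := ltn_ord i; rewrite /=; lia.
by apply: eq_bigr => i _; congr h; rewrite /=; lia.
Qed.

Lemma wsum_ext h b n b0 n0 : supp h b n -> b0 <= b -> b + n%:Z <= b0 + n0%:Z ->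
  wsum h b0 n0 = wsum h b n.
Proof.
move=> S H1 H2.
have [d Hd] : exists d : nat, b0 = b - d%:Z by exists `|b - b0|%N; lia.
have [e He] : exists e : nat, n0 = (d + n + e)%N by exists `|(b0 + n0%:Z - (b + n%:Z))%R|%N; lia.
by rewrite Hd He wsum_ext0.
Qed.

Lemma wsum_win h lo hi b n b' n' :
  (forall i, (i < lo) || (hi < i) -> h i = 0) ->
  b <= lo -> hi < b + n%:Z -> b' <= lo -> hi < b' + n'%:Z ->
  wsum h b n = wsum h b' n'.
Proof.
move=> S H1 H2 H3 H4.
have [B [HB1 [HB2 HBl]]] : exists B : int, B <= b /\ B <= b' /\ B <= lo.
  by have [h'|h'] := lerP b b'; [exists b | exists b']; lia.
have [E [HE1 [HE2 HBE]]] : exists E : int, b + n%:Z <= E /\ b' + n'%:Z <= E /\ B <= E.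
  by have [h'|h'] := lerP (b + n%:Z) (b' + n'%:Z); [exists (b' + n'%:Z) | exists (b + n%:Z)]; lia.
have e1 : wsum h B `|E - B|%N = wsum h b n.
  apply: wsum_ext; try lia.
  move=> i /orP [] Hi; apply: S; apply/orP; [left|right]; lia.
have e2 : wsum h B `|E - B|%N = wsum h b' n'.
  apply: wsum_ext; try lia.
  move=> i /orP [] Hi; apply: S; apply/orP; [left|right]; lia.
by rewrite -e1 -e2.
Qed.

Lemma lmulE f g Nf Ng k b n : is_laurent f -> is_laurent g ->
  vanish f Nf -> vanish g Ng -> b <= k - Ng -> Nf < b + n%:Z ->
  lmul f g k = wsum (fun i => f i * g (k - i)) b n.
Proof.
move=> Lf Lg Vf Vg H1 H2.
have Bf := bndP Lf; have Bg := bndP Lg.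
have Z : forall i, (i < k - Ng) || (i < k - bnd g) || (Nf < i) || (bnd f < i) ->
    f i * g (k - i) = 0.
  move=> i /orP [/orP [/orP [] | ] | ] Hi.
  - by rewrite Vg ?mulr0 //; lia.
  - by rewrite Bg ?mulr0 //; lia.
  - by rewrite Vf ?mul0r.
  - by rewrite Bf ?mul0r.
rewrite /lmul; case E: (bnd f + bnd g - k) => [m|m].
  have -> : \sum_(j < m.+1) f (k - bnd g + (j : nat)%:Z) * g (bnd g - (j : nat)%:Z)
          = wsum (fun i => f i * g (k - i)) (k - bnd g) m.+1.
    by apply: eq_bigr => j _; congr (_ * g _); lia.
  have [lo [Hl1 [Hl2 Hl3]]] : exists lo : int, k - Ng <= lo /\ k - bnd g <= lo /\
      (lo = k - Ng \/ lo = k - bnd g).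
    by have [h'|h'] := lerP (k - Ng) (k - bnd g); [exists (k - bnd g) | exists (k - Ng)]; lia.
  have [hi [Hh1 [Hh2 Hh3]]] : exists hi : int, hi <= Nf /\ hi <= bnd f /\
      (hi = Nf \/ hi = bnd f).
    by have [h'|h'] := lerP Nf (bnd f); [exists Nf | exists (bnd f)]; lia.
  apply: (@wsum_win _ lo hi); try lia.
  move=> i /orP [] Hi; apply: Z; case: Hl3 => Hl; case: Hh3 => Hh; subst lo hi; lia.
rewrite /wsum big1 // => j _; apply: Z; lia.
Qed.

Lemma wsum0 h b : wsum h b 0 = 0.
Proof. by rewrite /wsum big_ord0. Qed.

Lemma lmul_vanish f g Nf Ng : is_laurent f -> is_laurent g ->
  vanish f Nf -> vanish g Ng -> vanish (lmul f g) (Nf + Ng).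
Proof.
move=> Lf Lg Vf Vg k Hk.
by rewrite (@lmulE f g Nf Ng k (k - Ng) 0) ?wsum0 //; lia.
Qed.

Lemma lmul_laurent f g : is_laurent f -> is_laurent g -> is_laurent (lmul f g).
Proof.
move=> Lf Lg; exact: (vanish_laurent (lmul_vanish Lf Lg (bndP Lf) (bndP Lg))).
Qed.

Definition agree (M : int) (f g : laurent) := forall k, M <= k -> f k = g k.

Lemma lmul_agree f f' g g' N1 N2 M :
  is_laurent f -> is_laurent f' -> is_laurent g -> is_laurent g' ->
  0 <= N1 -> 0 <= N2 ->
  vanish f N1 -> vanish f' N1 -> vanish g N2 -> vanish g' N2 ->
  agree M f f' -> agree M g g' -> agree (M + N1 + N2) (lmul f g) (lmul f' g').
Proof.
move=> Lf Lf' Lg Lg' P1 P2 Vf Vf' Vg Vg' Af Ag k Hk.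
rewrite (@lmulE f g N1 N2 k (k - N2) (absz (N1 - (k - N2))%R).+1) //; last by lia.
rewrite (@lmulE f' g' N1 N2 k (k - N2) (absz (N1 - (k - N2))%R).+1) //; last by lia.
apply: eq_bigr => j _.
have [H|H] := lerP (k - N2 + (j : nat)%:Z) N1.
  by rewrite Af ?Ag //; lia.
by rewrite Vf ?Vf' ?mul0r.
Qed.

Definition shp (p : {poly F2}) (e : int) : laurent := fun k =>
  match k - e with Posz n => p`_n | Negz _ => 0 end.

Lemma shpE p e (n : nat) : shp p e (e + n%:Z) = p`_n.
Proof. by rewrite /shp; have -> : e + n%:Z - e = n%:Z by lia. Qed.

Lemma shp_lt p e k : k < e -> shp p e k = 0.
Proof. by rewrite /shp; case E: (k - e) => [n|n] //; lia. Qed.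

Lemma shp_vanish p e : vanish (shp p e) (e + (size p)%:Z).
Proof.
move=> k Hk; rewrite /shp; case E: (k - e) => [n|n] //.
by rewrite nth_default //; move: Hk E; rewrite /=; lia.
Qed.

Lemma shp_laurent p e : is_laurent (shp p e).
Proof. by exists (e + (size p)%:Z); apply: shp_vanish. Qed.

Lemma lpoly_shp p : lpoly p = shp p 0.
Proof. by apply: functional_extensionality => k; rewrite /shp subr0. Qed.

Lemma shp_mul p q e1 e2 : lmul (shp p e1) (shp q e2) = shp (p * q) (e1 + e2).
Proof.
apply: functional_extensionality => k.
pose N1 := e1 + (size p)%:Z; pose N2 := e2 + (size q)%:Z.
pose b := - ((absz k)%:Z + (absz N2)%:Z + (absz e1)%:Z).
pose n := (absz N1 + absz b + absz k + absz e2 + absz e1).+1.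
rewrite (@lmulE _ _ N1 N2 k b n); try (exact: shp_laurent || exact: shp_vanish || lia).
case E: (k - (e1 + e2)) => [D|D]; last first.
  rewrite {3}/shp E /wsum big1 // => j _; rewrite /shp.
  case E1: (b + (j : nat)%:Z - e1) => [x|x]; last by rewrite mul0r.
  case E2: (k - (b + (j : nat)%:Z) - e2) => [y|y]; last by rewrite mulr0.
  lia.
have -> : shp (p * q) (e1 + e2) k = wsum (fun i => shp p e1 i * shp q e2 (k - i)) e1 D.+1.
  rewrite /shp E coefM /wsum; apply: eq_bigr => j _.
  have -> : e1 + (j : nat)%:Z - e1 = (j : nat)%:Z by lia.
  have Hj := ltn_ord j.
  have -> : k - (e1 + (j : nat)%:Z) - e2 = (D - j)%N%:Z by lia.
  by [].
apply: (@wsum_win _ e1 (e1 + D%:Z)); try lia.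
move=> i /orP [] Hi; first by rewrite shp_lt ?mul0r.
by rewrite [shp q e2 _]shp_lt ?mulr0 //; lia.
Qed.

Definition tp (f : laurent) (M N : int) : {poly F2} :=
  \poly_(i < (absz (N - M)%R).+1) f (M + i%:Z).

Lemma tp_agree f M N : vanish f N -> agree M f (shp (tp f M N) M).
Proof.
move=> Vf k Hk.
have [m ->] : exists m : nat, k = M + m%:Z by exists (absz (k - M)); lia.
rewrite shpE coef_poly; case: ifP => H //.
by rewrite Vf //; move: H; rewrite /=; lia.
Qed.

Lemma tp_vanish f M N : vanish f N -> vanish (shp (tp f M N) M) N.
Proof.
move=> Vf k Hk.
have [H|H] := ltrP k M; first by rewrite shp_lt.
have [m Em] : exists m : nat, k = M + m%:Z by exists (absz (k - M)); lia.
rewrite Em shpE coef_poly; case: ifP => H' //.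
by rewrite -Em Vf.
Qed.

Lemma agree_le M M' f g : agree M f g -> M <= M' -> agree M' f g.
Proof. by move=> A H k Hk; apply: A; lia. Qed.

Lemma agree_refl M f : agree M f f.
Proof. by []. Qed.

Lemma lbound f : is_laurent f -> exists N, 0 <= N /\ vanish f N.
Proof.
move=> Lf; exists (absz (bnd f))%:Z; split; first by lia.
by apply: vanish_le (bndP Lf) _; lia.
Qed.

Lemma lbound2 f g : is_laurent f -> is_laurent g ->
  exists N, 0 <= N /\ vanish f N /\ vanish g N.
Proof.
move=> /lbound [N1 [P1 V1]] /lbound [N2 [P2 V2]].
exists (N1 + N2); split; first by lia.
by split; [apply: vanish_le V1 _ | apply: vanish_le V2 _]; lia.
Qed.

Lemma lmulC f g : is_laurent f -> is_laurent g -> lmul f g = lmul g f.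
Proof.
move=> Lf Lg; apply: functional_extensionality => k.
have [N [P [Vf Vg]]] := lbound2 Lf Lg.
pose M := k - N - N.
have Af := @tp_agree _ M _ Vf; have Ag := @tp_agree _ M _ Vg.
have Vf' := @tp_vanish _ M _ Vf; have Vg' := @tp_vanish _ M _ Vg.
have Lf' := shp_laurent (tp f M N) M; have Lg' := shp_laurent (tp g M N) M.
have E1 := lmul_agree Lf Lf' Lg Lg' P P Vf Vf' Vg Vg' Af Ag.
have E2 := lmul_agree Lg Lg' Lf Lf' P P Vg Vg' Vf Vf' Ag Af.
rewrite E1 ?E2; try (rewrite /M; lia).
by rewrite !shp_mul mulrC.
Qed.

Lemma lmulA f g h : is_laurent f -> is_laurent g -> is_laurent h ->
  lmul f (lmul g h) = lmul (lmul f g) h.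
Proof.
move=> Lf Lg Lh; apply: functional_extensionality => k.
have [N1 [P1 [Vf Vg]]] := lbound2 Lf Lg.
have [N2 [P2 Vh]] := lbound Lh.
pose N := N1 + N2.
have P : 0 <= N by rewrite /N; lia.
have {Vf}Vf : vanish f N by apply: vanish_le Vf _; rewrite /N; lia.
have {Vg}Vg : vanish g N by apply: vanish_le Vg _; rewrite /N; lia.
have {Vh}Vh : vanish h N by apply: vanish_le Vh _; rewrite /N; lia.
pose M := k - N *+ 5.
have Af := @tp_agree _ M _ Vf; have Ag := @tp_agree _ M _ Vg; have Ah := @tp_agree _ M _ Vh.
have Vf' := @tp_vanish _ M _ Vf; have Vg' := @tp_vanish _ M _ Vg; have Vh' := @tp_vanish _ M _ Vh.
have Lf' := shp_laurent (tp f M N) M; have Lg' := shp_laurent (tp g M N) M.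
have Lh' := shp_laurent (tp h M N) M.
have P2' : 0 <= N + N by lia.
have Egh := lmul_agree Lg Lg' Lh Lh' P P Vg Vg' Vh Vh' Ag Ah.
have Efg := lmul_agree Lf Lf' Lg Lg' P P Vf Vf' Vg Vg' Af Ag.
have Vgh := lmul_vanish Lg Lh Vg Vh; have Vgh' := lmul_vanish Lg' Lh' Vg' Vh'.
have Vfg := lmul_vanish Lf Lg Vf Vg; have Vfg' := lmul_vanish Lf' Lg' Vf' Vg'.
have E1 := lmul_agree Lf Lf' (lmul_laurent Lg Lh) (lmul_laurent Lg' Lh') P P2'
   Vf Vf' Vgh Vgh' (agree_le Af (_ : M <= M + N + N)) Egh.
have E2 := lmul_agree (lmul_laurent Lf Lg) (lmul_laurent Lf' Lg') Lh Lh' P2' P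
   Vfg Vfg' Vh Vh' Efg (agree_le Ah (_ : M <= M + N + N)).
rewrite E1 ?E2; try (rewrite /M; lia).
by rewrite !shp_mul mulrA addrA.
Qed.

Lemma lone_shp : lone = shp 1 0.
Proof.
apply: functional_extensionality => k; rewrite /lone /shp subr0.
case: k => [[|n]|n] //=; by rewrite coef1.
Qed.

Lemma lone_laurent : is_laurent lone.
Proof. by rewrite lone_shp; apply: shp_laurent. Qed.

Lemma lmul1 f : is_laurent f -> lmul lone f = f.
Proof.
move=> Lf; apply: functional_extensionality => k.
have [N [P Vf]] := lbound Lf.
have V1 : vanish lone 1.
  rewrite lone_shp; have := vanish_le (@shp_vanish 1 0); rewrite size_poly1; apply; lia.
pose M := k - 1 - N.
have Af := @tp_agree _ M _ Vf; have Vf' := @tp_vanish _ M _ Vf.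
have Lf' := shp_laurent (tp f M N) M.
have P1 : (0:int) <= 1 by [].
have E := lmul_agree lone_laurent lone_laurent Lf Lf' P1 P V1 V1 Vf Vf' (@agree_refl M lone) Af.
rewrite E; last by rewrite /M; lia.
rewrite {1}lone_shp shp_mul mul1r add0r Af //; rewrite /M; lia.
Qed.

Lemma lmul1r f : is_laurent f -> lmul f lone = f.
Proof. by move=> Lf; rewrite lmulC ?lmul1 //; apply: lone_laurent. Qed.

Lemma ladd_vanish f g N : vanish f N -> vanish g N -> vanish (ladd f g) N.
Proof. by move=> Vf Vg k Hk; rewrite /ladd Vf ?Vg ?addr0. Qed.

Lemma ladd_laurent f g : is_laurent f -> is_laurent g -> is_laurent (ladd f g).
Proof.
move=> Lf Lg; have [N [_ [Vf Vg]]] := lbound2 Lf Lg.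
exact: vanish_laurent (ladd_vanish Vf Vg).
Qed.

Lemma lmulDr f g h : is_laurent f -> is_laurent g -> is_laurent h ->
  lmul f (ladd g h) = ladd (lmul f g) (lmul f h).
Proof.
move=> Lf Lg Lh; apply: functional_extensionality => k.
have [N1 [P1 [Vf Vg]]] := lbound2 Lf Lg.
have [N2 [P2 Vh]] := lbound Lh.
pose N := N1 + N2.
have {Vf}Vf : vanish f N by apply: vanish_le Vf _; rewrite /N; lia.
have {Vg}Vg : vanish g N by apply: vanish_le Vg _; rewrite /N; lia.
have {Vh}Vh : vanish h N by apply: vanish_le Vh _; rewrite /N; lia.
have Lgh := ladd_laurent Lg Lh.
rewrite {2}/ladd (@lmulE f (ladd g h) N N k (k - N) (absz (N - (k - N))%R).+1) //;
  try lia; try exact: ladd_vanish.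
rewrite (@lmulE f g N N k (k - N) (absz (N - (k - N))%R).+1) //; try lia.
rewrite (@lmulE f h N N k (k - N) (absz (N - (k - N))%R).+1) //; try lia.
by rewrite /wsum -big_split /=; apply: eq_bigr => j _; rewrite /ladd mulrDr.
Qed.

Lemma laddC f g : ladd f g = ladd g f.
Proof. by apply: functional_extensionality => k; rewrite /ladd addrC. Qed.

Lemma laddA f g h : ladd f (ladd g h) = ladd (ladd f g) h.
Proof. by apply: functional_extensionality => k; rewrite /ladd addrA. Qed.

Lemma ladd0 f : ladd lzero f = f.
Proof. by apply: functional_extensionality => k; rewrite /ladd /lzero add0r. Qed.

Lemma laddxx f : ladd f f = lzero.
Proof. by apply: functional_extensionality => k; rewrite /ladd addxx. Qed.

Lemma lzero_laurent : is_laurent lzero.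
Proof. by exists 0. Qed.

Lemma lpoly_laurent p : is_laurent (lpoly p).
Proof. rewrite lpoly_shp; exact: shp_laurent. Qed.

Lemma lpolyM p q : lpoly (p * q) = lmul (lpoly p) (lpoly q).
Proof. by rewrite !lpoly_shp shp_mul addr0. Qed.

Lemma lpolyD p q : lpoly (p + q) = ladd (lpoly p) (lpoly q).
Proof.
apply: functional_extensionality => k; rewrite /ladd /lpoly.
by case: k => n //=; rewrite ?coefD ?addr0.
Qed.

Lemma lpoly1 : lpoly 1 = lone.
Proof. by rewrite lpoly_shp lone_shp. Qed.

Lemma lpoly0 : lpoly 0 = lzero.
Proof. by apply: functional_extensionality => k; rewrite /lpoly; case: k => n //; rewrite coef0. Qed.

Lemma linv_spec f : (exists y, is_laurent y /\ lmul f y = lone) ->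
  is_laurent (linv f) /\ lmul f (linv f) = lone.
Proof. by move=> H; rewrite /linv; apply: (epsilon_spec (inhabits lzero) _ H). Qed.

Lemma inv_unique f y z : is_laurent f -> is_laurent y -> is_laurent z ->
  lmul f y = lone -> lmul f z = lone -> y = z.
Proof.
move=> Lf Ly Lz Hy Hz.
rewrite -(lmul1r Ly) -Hz lmulA // (lmulC Ly Lf) Hy lmul1 //.
Qed.

Lemma linvE f y : is_laurent f -> is_laurent y -> lmul f y = lone -> linv f = y.
Proof.
move=> Lf Ly H.
have [L1 H1] := linv_spec (ex_intro _ y (conj Ly H)).
exact: inv_unique Lf L1 Ly H1 H.
Qed.

Section PolyInv.
Variable q : {poly F2}.
Hypothesis q0 : q != 0.

Definition Qd (n : nat) := 'X^n %/ q.

Lemma Qd_shift n j : (Qd n.+1)`_j.+1 = (Qd n)`_j.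
Proof.
rewrite /Qd exprS {1}(divp_eq 'X^n q) mulrDr mulrA divpD mulpK //.
rewrite coefD coefXM /=.
rewrite [X in _ + X]nth_default ?addr0 //.
rewrite size_divp //.
apply: (leq_trans (leq_sub2r _ (size_mul_leq _ _))).
rewrite size_polyX.
set s := size (_ %% _).
have H2 : (s < size q)%N by rewrite /s ltn_modp.
have two : (2%R : nat) = 2%N by [].
move: H2; rewrite -!subn1 two /=; set sq := size q; clearbody s sq; lia.
Qed.

Lemma Qd_step n : agree (- n%:Z) (shp (Qd n.+1) (- n.+1%:Z)) (shp (Qd n) (- n%:Z)).
Proof.
move=> k Hk.
have [m ->] : exists m : nat, k = - n%:Z + m%:Z by exists (absz (k + n%:Z)); lia.
rewrite shpE.
have -> : - n%:Z + m%:Z = - n.+1%:Z + m.+1%:Z by lia.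
by rewrite shpE Qd_shift.
Qed.

Lemma Qd_agree n d : agree (- n%:Z) (shp (Qd (n + d)) (- (n + d)%N%:Z)) (shp (Qd n) (- n%:Z)).
Proof.
elim: d => [|d IH]; first by rewrite addn0.
move=> k Hk; rewrite addnS Qd_step ?IH //; lia.
Qed.

Lemma Qd_vanish n : vanish (shp (Qd n) (- n%:Z)) (1 - (size q)%:Z).
Proof.
move=> k Hk.
have [H|H] := ltrP k (- n%:Z); first by rewrite shp_lt.
have [m Em] : exists m : nat, k = - n%:Z + m%:Z by exists (absz (k + n%:Z)); lia.
rewrite Em shpE nth_default // /Qd size_divp // size_polyXn.
have : (0 < size q)%N by rewrite size_poly_gt0.
move: Hk; rewrite Em; set sq := size q; clearbody sq; rewrite -subn1; lia.
Qed.

Definition ginv : laurent := fun k => shp (Qd (absz k)) (- (absz k)%:Z) k.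

Lemma ginv_agree n : agree (- n%:Z) ginv (shp (Qd n) (- n%:Z)).
Proof.
move=> k Hk; rewrite /ginv.
have [H|H] := leqP n (absz k).
  have := @Qd_agree n (absz k - n); rewrite subnKC //; apply; lia.
have := @Qd_agree (absz k) (n - absz k); rewrite subnKC ?(ltnW H) //.
by move=> A; rewrite A //; lia.
Qed.

Lemma ginv_vanish : vanish ginv (1 - (size q)%:Z).
Proof. by move=> k Hk; rewrite /ginv Qd_vanish. Qed.

Lemma ginv_laurent : is_laurent ginv.
Proof. exact: vanish_laurent ginv_vanish. Qed.

Lemma ginv_mul : lmul (lpoly q) ginv = lone.
Proof.
apply: functional_extensionality => k.
pose n := (absz k + 2 * size q)%N.
have sq1 : (0 < size q)%N by rewrite size_poly_gt0.
have Vq : vanish (lpoly q) (size q)%:Z.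
  by rewrite lpoly_shp; have := @shp_vanish q 0; rewrite add0r.
have Vg : vanish ginv (size q)%:Z by apply: vanish_le ginv_vanish _; lia.
have Vg' : vanish (shp (Qd n) (- n%:Z)) (size q)%:Z by apply: vanish_le (Qd_vanish n) _; lia.
have P : (0:int) <= (size q)%:Z by [].
have E := lmul_agree (lpoly_laurent q) (lpoly_laurent q) ginv_laurent (shp_laurent _ _)
   P P Vq Vq Vg Vg' (@agree_refl _ _) (@ginv_agree n).
rewrite E; last by rewrite /n; lia.
rewrite lpoly_shp shp_mul add0r.
have [m Em] : exists m : nat, k = - n%:Z + m%:Z by exists (absz (k + n%:Z)); lia.
rewrite Em shpE /Qd mulrC.
have -> : 'X^n %/ q * q = 'X^n - 'X^n %% q by rewrite {2}(divp_eq 'X^n q) addrK.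
rewrite coefB coefXn [X in _ - X]nth_default ?subr0; last first.
  have := ltn_modp 'X^n q; rewrite q0 => H; move: H Em; rewrite /n; set sq := size q; set sr := size ('X^_ %% q)%R; clearbody sq sr; lia.
rewrite /lone; case: eqP => H1; case: eqP => H2 //; lia.
Qed.

End PolyInv.

Definition LS := {f : laurent | is_laurent f}.
HB.instance Definition _ := gen_eqMixin LS.
HB.instance Definition _ := gen_choiceMixin LS.

Definition LSmk f (H : is_laurent f) : LS := exist _ f H.
Definition lsv (x : LS) : laurent := proj1_sig x.
Lemma lsvP (x : LS) : is_laurent (lsv x). Proof. exact: proj2_sig x. Qed.
#[local] Hint Resolve lsvP : core.
Lemma lsv_inj (x y : LS) : lsv x = lsv y -> x = y.
Proof. by case: x => f Hf; case: y => g Hg /= E; subst g; rewrite (Prop_irrelevance Hf Hg). Qed.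

Definition LS0 : LS := LSmk lzero_laurent.
Definition LSadd (x y : LS) : LS := LSmk (ladd_laurent (lsvP x) (lsvP y)).
Definition LSopp (x : LS) : LS := x.
Definition LS1 : LS := LSmk lone_laurent.
Definition LSmul (x y : LS) : LS := LSmk (lmul_laurent (lsvP x) (lsvP y)).

Lemma LSaddA : associative LSadd.
Proof. by move=> x y z; apply: lsv_inj; rewrite /= laddA. Qed.
Lemma LSaddC : commutative LSadd.
Proof. by move=> x y; apply: lsv_inj; rewrite /= laddC. Qed.
Lemma LSadd0 : left_id LS0 LSadd.
Proof. by move=> x; apply: lsv_inj; rewrite /= ladd0. Qed.
Lemma LSaddN : left_inverse LS0 LSopp LSadd.
Proof. by move=> x; apply: lsv_inj; rewrite /= laddxx. Qed.

HB.instance Definition _ := GRing.isZmodule.Build LS LSaddA LSaddC LSadd0 LSaddN.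

Lemma LSmulA : associative LSmul.
Proof. by move=> x y z; apply: lsv_inj; rewrite /= lmulA. Qed.
Lemma LSmulC : commutative LSmul.
Proof. by move=> x y; apply: lsv_inj; rewrite /= lmulC. Qed.
Lemma LSmul1 : left_id LS1 LSmul.
Proof. by move=> x; apply: lsv_inj; rewrite /= lmul1. Qed.
Lemma LSmulD : left_distributive LSmul (+%R : LS -> LS -> LS).
Proof.
move=> x y z; apply: lsv_inj; rewrite /= lmulC //; last by apply: ladd_laurent.
rewrite lmulDr //; congr ladd; exact: lmulC.
Qed.
Lemma LS1_neq0 : LS1 != 0.
Proof.
apply/eqP => H; have := congr1 (fun x => lsv x 0) H.
by rewrite /= /lone /lzero /=.
Qed.

HB.instance Definition _ := GRing.Zmodule_isComNzRing.Build LS LSmulA LSmulC LSmul1 LSmulD LS1_neq0.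

Lemma lsvD (x y : LS) : lsv (x + y) = ladd (lsv x) (lsv y). Proof. by []. Qed.
Lemma lsvM (x y : LS) : lsv (x * y) = lmul (lsv x) (lsv y). Proof. by []. Qed.
Lemma lsv1 : lsv 1 = lone. Proof. by []. Qed.
Lemma lsv0 : lsv 0 = lzero. Proof. by []. Qed.

Lemma LS2 : (2%:R : LS) = 0.
Proof. by apply: lsv_inj; rewrite /= laddxx. Qed.

Definition LP (p : {poly F2}) : LS := LSmk (lpoly_laurent p).
Lemma LPM p q : LP (p * q) = LP p * LP q.
Proof. by apply: lsv_inj; rewrite /= lpolyM. Qed.
Lemma LPD p q : LP (p + q) = LP p + LP q.
Proof. by apply: lsv_inj; rewrite /= lpolyD. Qed.
Lemma LP1 : LP 1 = 1.
Proof. by apply: lsv_inj; rewrite /= lpoly1. Qed.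
Lemma LP0 : LP 0 = 0.
Proof. by apply: lsv_inj; rewrite /= lpoly0. Qed.
Lemma LPX p n : LP (p ^+ n) = LP p ^+ n.
Proof. by elim: n => [|n IH]; rewrite ?expr0 ?LP1 // !exprS LPM IH. Qed.

Lemma ginv_laurent' q : is_laurent (ginv q).
Proof.
have [->|q0] := eqVneq q 0; last exact: ginv_laurent.
exists 0 => k _; rewrite /ginv /Qd divp0 /shp; case: (_ - _) => n //; by rewrite coef0.
Qed.

Definition IP (q : {poly F2}) : LS := LSmk (ginv_laurent' q).

Lemma LP_IP q : q != 0 -> LP q * IP q = 1.
Proof. by move=> q0; apply: lsv_inj; rewrite /= ginv_mul. Qed.

Lemma IP_vanish q : q != 0 -> vanish (lsv (IP q)) (1 - (size q)%:Z).
Proof. by move=> q0; apply: ginv_vanish. Qed.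

Lemma LS_inv_unique (x y z : LS) : x * y = 1 -> x * z = 1 -> y = z.
Proof. by move=> H1 H2; rewrite -[y]mulr1 -H2 mulrA (mulrC y) H1 mul1r. Qed.

Lemma linvS (x y : LS) : x * y = 1 -> linv (lsv x) = lsv y.
Proof. move=> H; apply: linvE => //; by have := congr1 lsv H. Qed.

Lemma IPM q1 q2 : q1 != 0 -> q2 != 0 -> IP (q1 * q2) = IP q1 * IP q2.
Proof.
move=> h1 h2; apply: (@LS_inv_unique (LP (q1 * q2))); first by rewrite LP_IP // mulf_neq0.
by rewrite LPM mulrACA !LP_IP // mulr1.
Qed.

Lemma IP1 : IP 1 = 1.
Proof. by apply: (@LS_inv_unique (LP 1)); rewrite ?LP_IP ?oner_neq0 // LP1 mulr1. Qed.

Definition FR (p q : {poly F2}) : LS := LP p * IP q.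

Lemma FR_cancel p q c : q != 0 -> c != 0 -> FR (p * c) (q * c) = FR p q.
Proof. by move=> q0 c0; rewrite /FR IPM // LPM mulrACA LP_IP // mulr1. Qed.

Lemma FRD p1 q1 p2 q2 : q1 != 0 -> q2 != 0 ->
  FR p1 q1 + FR p2 q2 = FR (p1 * q2 + p2 * q1) (q1 * q2).
Proof.
move=> h1 h2; rewrite /FR IPM // LPD !LPM.
have E1 := LP_IP h1; have E2 := LP_IP h2.
have -> : (LP p1 * LP q2 + LP p2 * LP q1) * (IP q1 * IP q2) =
   LP p1 * IP q1 * (LP q2 * IP q2) + LP p2 * IP q2 * (LP q1 * IP q1) by ring.
by rewrite E1 E2 !mulr1.
Qed.

Lemma FR_inv p q : p != 0 -> q != 0 -> FR p q * FR q p = 1.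
Proof. by move=> p0 q0; rewrite /FR mulrACA (mulrC (IP q)) mulrACA !LP_IP // mulr1. Qed.

Lemma lsv_FR p q : lsv (FR p q) = lmul (lpoly p) (linv (lpoly q)) \/ q = 0.
Proof.
have [->|q0] := eqVneq q 0; first by right.
left; rewrite lsvM; congr lmul; symmetry.
by have := linvS (LP_IP q0).
Qed.

Lemma poly2 : (2%:R : {poly F2}) = 0.
Proof. by rewrite -polyC_natr two0. Qed.
Lemma paddxx (p : {poly F2}) : p + p = 0.
Proof. by rewrite -mulr2n -mulr_natr poly2 mulr0. Qed.
Lemma poppE (p : {poly F2}) : - p = p.
Proof. by apply/eqP; rewrite eq_sym -subr_eq0 opprK paddxx. Qed.
Lemma pchar2 (X Y K : {poly F2}) : X = Y + 2%:R * K -> X = Y.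
Proof. by rewrite poly2 mul0r addr0. Qed.

Record m22 := M22 { m11 : {poly F2}; m12 : {poly F2}; m21 : {poly F2}; m22' : {poly F2} }.
Definition mmul (A B : m22) : m22 :=
  M22 (m11 A * m11 B + m12 A * m21 B) (m11 A * m12 B + m12 A * m22' B)
      (m21 A * m11 B + m22' A * m21 B) (m21 A * m12 B + m22' A * m22' B).
Definition mid := M22 1 0 0 1.
Definition mE (x : {poly F2}) := M22 x 1 1 0.
Definition mat (w : seq {poly F2}) : m22 := foldr (fun x M => mmul (mE x) M) mid w.
Definition mdet (A : m22) := m11 A * m22' A - m12 A * m21 A.

Lemma mmulA A B C : mmul A (mmul B C) = mmul (mmul A B) C.
Proof. by case: A => ????; case: B => ????; case: C => ????; rewrite /mmul /=; congr M22; ring. Qed.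
Lemma mmul1 A : mmul mid A = A.
Proof. by case: A => ????; rewrite /mmul /=; congr M22; ring. Qed.
Lemma mmulr1 A : mmul A mid = A.
Proof. by case: A => ????; rewrite /mmul /=; congr M22; ring. Qed.

Lemma mat_cat w1 w2 : mat (w1 ++ w2) = mmul (mat w1) (mat w2).
Proof. by elim: w1 => [|x w IH] /=; rewrite ?mmul1 // IH mmulA. Qed.

Lemma mdetM A B : mdet (mmul A B) = mdet A * mdet B.
Proof. by case: A => ????; case: B => ????; rewrite /mdet /mmul /=; ring. Qed.

Lemma mat_det w : mdet (mat w) = 1.
Proof.
elim: w => [|x w IH] /=; first by rewrite /mdet /=; ring.
by rewrite mdetM IH /mdet /= mulr0 mul1r sub0r poppE mulr1.
Qed.

Lemma mat_cons x w : mat (x :: w) = M22 (x * m11 (mat w) + m21 (mat w))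
   (x * m12 (mat w) + m22' (mat w)) (m11 (mat w)) (m12 (mat w)).
Proof. by rewrite /= /mmul /=; congr M22; ring. Qed.

Definition ncst (p : {poly F2}) := (1 < size p)%N.

Lemma mat_size w : all ncst w ->
  (size (m21 (mat w)) < size (m11 (mat w)))%N /\ (size w < size (m11 (mat w)))%N.
Proof.
elim: w => [|x w IH]; first by rewrite /= size_poly0 size_poly1.
move=> /andP [hx /IH [H1 H2]]; rewrite mat_cons /=.
have K0 : m11 (mat w) != 0 by rewrite -size_poly_gt0; lia.
have x0 : x != 0 by rewrite -size_poly_gt0; rewrite /ncst in hx; lia.
have S : size (x * m11 (mat w)) = (size x + size (m11 (mat w))).-1 by rewrite size_mul.
have S2 : size (x * m11 (mat w) + m21 (mat w)) = size (x * m11 (mat w)).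
  rewrite size_addl // S -subn1; rewrite /ncst in hx; set sx := size x in hx S *; set sK := size (m11 (mat w)) in H1 H2 S *.
  clearbody sx sK; lia.
rewrite S2 S -subn1; rewrite /ncst in hx; set sx := size x in hx S *; set sK := size (m11 (mat w)) in H1 H2 S *; clearbody sx sK; lia.
Qed.

Lemma m21_neq0 l : all ncst l -> l != [::] -> m21 (mat l) != 0.
Proof.
case: l => [|x w] //= /andP [_ H] _.
have [H1 _] := mat_size H; rewrite /mmul /= mul1r mul0r addr0 -size_poly_gt0; lia.
Qed.

Lemma m11_neq0 l : all ncst l -> m11 (mat l) != 0.
Proof. by move=> H; have [H1 _] := mat_size H; rewrite -size_poly_gt0; lia. Qed.

Lemma cf_mat w x : all ncst (rcons w x) ->
  foldr (fun a acc => ladd a (linv acc)) (lpoly x) (map lpoly w) =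
  lsv (FR (m11 (mat (rcons w x))) (m21 (mat (rcons w x)))).
Proof.
elim: w => [|y w IH].
  move=> _; have -> : mat (rcons [::] x) = mE x by rewrite /= mmulr1.
  have -> : m11 (mE x) = x by [].
  have -> : m21 (mE x) = 1 by [].
  by rewrite /FR IP1 mulr1.
rewrite rcons_cons => /andP [hy H].
rewrite [map _ _]/= [foldr _ _ _]/= IH //.
have K0 := m11_neq0 H; have L0 : m21 (mat (rcons w x)) != 0.
  by apply: m21_neq0 => //; case: (w) => [|? ?].
rewrite (linvS (FR_inv K0 L0)).
rewrite mat_cons.
have -> : forall a b c d, m11 (M22 a b c d) = a by [].
have -> : forall a b c d, m21 (M22 a b c d) = c by [].
set K := m11 _; set L := m21 _.
change (lpoly y) with (lsv (LP y)); rewrite -lsvD; congr lsv.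
by rewrite /FR LPD LPM mulrDl -mulrA LP_IP // mulr1.
Qed.

Section Words.
Variable T : Type.
Variable x0 : T.
Variable e : nat -> T.

Lemma size_W n : size (Wword e n) = (2 ^ n - 1)%N.
Proof.
elim: n => [|n IH] //=; rewrite size_cat /= IH expnS.
have := expn_gt0 2 n; set t := (2 ^ n)%N; lia.
Qed.

Lemma W_prefix n d i : (i < size (Wword e n))%N ->
  nth x0 (Wword e (n + d)) i = nth x0 (Wword e n) i.
Proof.
move=> Hi; elim: d => [|d IH]; first by rewrite addn0.
rewrite addnS /= nth_cat IH.
have : (size (Wword e n) <= size (Wword e (n + d)))%N.
  rewrite !size_W; apply: leq_sub2r; apply: leq_pexp2l => //; lia.
by move=> H; case: ifP => // /negbT; rewrite -leqNgt => H'; lia.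
Qed.

Lemma sword_nth N i : (i < size (Wword e N))%N -> sword x0 e i = nth x0 (Wword e N) i.
Proof.
move=> Hi; rewrite /sword.
have Hi1 : (i < size (Wword e i.+1))%N.
  rewrite size_W; have := ltn_expl i.+1 (ltnSn 1); set t := (2 ^ i.+1)%N; lia.
have [H|H] := leqP N i.+1.
  by rewrite -(subnKC H) W_prefix // subnKC.
by rewrite -(subnKC (ltnW H)) W_prefix.
Qed.

Lemma W_all (P : pred T) n : (forall k, P (e k)) -> all P (Wword e n).
Proof. by move=> H; elim: n => [|n IH] //=; rewrite all_cat IH /= H IH. Qed.

Lemma map_sword N : map (sword x0 e) (iota 0 (size (Wword e N))) = Wword e N.
Proof.
rewrite -[RHS](mkseq_nth x0) /mkseq; apply/eq_in_map => i.
by rewrite mem_iota => /andP [_ H]; apply: sword_nth.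
Qed.

Lemma sword_in (P : T -> Prop) i : (forall k, P (e k)) -> P (sword x0 e i).
Proof.
move=> H; rewrite /sword.
have Hi1 : (i < size (Wword e i.+1))%N.
  rewrite size_W; have := ltn_expl i.+1 (ltnSn 1); set t := (2 ^ i.+1)%N; lia.
have := W_all i.+1 (P := fun x => `[< P x >]) (fun k => (asboolT (H k))).
by move/all_nthP => /(_ x0 i Hi1) /asboolP.
Qed.

End Words.


Lemma eq_mod (X Y Z : {poly F2}) : X - Y = Z -> Z = 0 -> X = Y.
Proof. by move=> H H0; apply/eqP; rewrite -subr_eq0 H H0. Qed.

Lemma psqrD (x y : {poly F2}) : (x + y) ^+ 2 = x ^+ 2 + y ^+ 2.
Proof. by apply: (@pchar2 _ _ (x * y)); ring. Qed.

Section Poly.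
Variables a b c : {poly F2}.

Definition e3 := eps3 a b c.
Lemma e3_0 K : e3 (3 * K) = a.
Proof. by rewrite /e3 /eps3 modnMr. Qed.
Lemma e3_1 K : e3 (3 * K).+1 = b.
Proof. by rewrite /e3 /eps3 (_ : ((3 * K).+1 %% 3 = 1)%N) //; lia. Qed.
Lemma e3_2 K : e3 (3 * K).+2 = c.
Proof. by rewrite /e3 /eps3 (_ : ((3 * K).+2 %% 3 = 2)%N) //; lia. Qed.

Fixpoint pw (N : nat) : {poly F2} :=
  if N is N'.+1 then e3 N' * pw N' ^+ 2 else 1.
Fixpoint rw (N : nat) : {poly F2} :=
  if N is N'.+1 then e3 N' * pw N' * rw N' + 1 else 0.
Fixpoint uw (N : nat) : {poly F2} :=
  if N is N'.+1 then e3 N' * rw N' ^+ 2 else 1.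

Lemma pwS N : pw N.+1 = e3 N * pw N ^+ 2. Proof. by []. Qed.
Lemma rwS N : rw N.+1 = e3 N * pw N * rw N + 1. Proof. by []. Qed.

Lemma mat_W N : mat (Wword e3 N) = M22 (pw N) (rw N) (rw N) (uw N).
Proof.
elim: N => [|N IH] //=.
have D := mat_det (Wword e3 N); rewrite IH /mdet /= in D.
rewrite mat_cat /= IH /mmul /=.
set p := pw N; set r := rw N; set u := uw N; set e := e3 N.
congr M22.
- by apply: (@pchar2 _ _ (p * r)); ring.
- apply: (@pchar2 _ _ (r * r)); apply: (@eq_mod _ _ (p * u - r * r - 1)); first ring.
  by rewrite D subrr.
- apply: (@pchar2 _ _ (r * r)); apply: (@eq_mod _ _ (p * u - r * r - 1)); first ring.
  by rewrite D subrr.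
- by apply: (@pchar2 _ _ (r * u)); ring.
Qed.

Definition al := c * b^+2 * a^+4.
Fixpoint Ys (K : nat) : {poly F2} * {poly F2} * {poly F2} * {poly F2} :=
  if K is K'.+1 then
    let: (P, Y0, Y1, Y2) := Ys K' in
    (al * P^+8, al * P^+7 * Y0 + c * b^+2 * a^+3 * P^+6,
     al * P^+7 * Y1 + c * b * a^+2 * P^+4, al * P^+7 * Y2 + 1)
  else (1, 0, 0, 0).

Lemma Ys_pw K : let: (P, Y0, Y1, Y2) := Ys K in
  pw (3 * K) = P /\ rw (3 * K) = Y0 + Y1 + Y2.
Proof.
elim: K => [|K IH]; first by split => //=; rewrite !addr0.
rewrite [Ys _]/=; case: (Ys K) IH => [[[P Y0] Y1] Y2] [Hp Hr].
rewrite (_ : (3 * K.+1 = (3 * K).+2.+1)%N); last by lia.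
rewrite !rwS !pwS.
rewrite e3_0 e3_1 e3_2 Hp Hr /al; split; ring.
Qed.

Lemma Ys_rel K : let: (P, Y0, Y1, Y2) := Ys K in
  Y0 ^+ 2 = b * P * Y1 /\ Y1 ^+ 2 = c * P * Y2 /\ Y2 ^+ 2 = a * P * Y0 + P ^+ 2 + 1.
Proof.
elim: K => [|K IH].
  rewrite /= !expr0n /= !mulr0 !add0r; split => //; split => //.
  by rewrite expr1n paddxx.
rewrite [Ys _]/=; case: (Ys K) IH => [[[P Y0] Y1] Y2] [R0 [R1 R2]].
rewrite !psqrD !exprMn R0 R1 R2 /al expr1n.
split; last split.
- ring.
- ring.
- ring.
Qed.

Definition cA := a^+3*b^+2*c + a^+2*b^+2*c^+2 + a*b^+3*c^+2 + b^+4*c^+2 + a*b^+2*c^+3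
           + a*b*c^+4 + a^+2*b*c + a*b^+2*c + a*b*c^+2 + c^+4 + 1.
Definition cB0 := a^+4*b^+2*c + a^+3*b^+2*c^+2 + a^+2*b^+3*c^+2 + a*b^+4*c^+2
            + a^+2*b^+2*c^+3 + a^+2*b*c^+4.
Definition cB1 := a^+3*b^+2*c + a^+2*b^+2*c^+2 + a*b^+3*c^+2 + a^+2*b*c^+3.
Definition cB2 := a^+2*b*c + a*b^+2*c + a*b*c^+2.
Definition cC1 := b^+4*c^+2 + cB1 + cB2*c^+2.
Definition cC2 := c^+4 + cB2.

Lemma G_id K : let P := pw (3 * K) in let r := rw (3 * K) in
  r^+8 + (cA * P^+8 + (cB0 * r * P^+7 + (cB1 * r^+2 * P^+6 + cB2 * r^+4 * P^+4)))
  = cC1 * P^+6 + cC2 * P^+4 + 1.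
Proof.
move=> P r.
have := Ys_pw K; have := Ys_rel K.
case: (Ys K) => [[[P' Y0] Y1] Y2] [R0 [R1 R2]] [Hp Hr].
rewrite -/P in Hp; rewrite -/r in Hr; clearbody P r; subst P'.
have S1e : r^+2 = b*P*Y1 + c*P*Y2 + a*P*Y0 + P^+2 + 1.
  by rewrite Hr !psqrD R0 R1 R2; ring.
have S2e : r^+4 = b^+2*c*P^+3*Y2 + c^+2*a*P^+3*Y0 + (c^+2*P^+4 + c^+2*P^+2) + a^+2*b*P^+3*Y1 + P^+4 + 1.
  by rewrite (_ : 4 = 2 * 2)%N // exprM S1e !psqrD !exprMn R0 R1 R2 expr1n; ring.
have S3e : r^+8 = (b^+2*c*P^+3*Y2 + c^+2*a*P^+3*Y0 + (c^+2*P^+4 + c^+2*P^+2) + a^+2*b*P^+3*Y1 + P^+4 + 1)^+2.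
  by rewrite -S2e -exprM.
rewrite S3e S2e S1e Hr.
rewrite !psqrD !exprMn R0 R1 R2 expr1n.
rewrite /cC1 /cC2 /cA /cB0 /cB1 /cB2.
apply: (@pchar2 _ _ ((P^+8) + (c^+4*P^+8) + (b^+4*c^+2*P^+8) + (a*b*c^+2*P^+8) + (a*b*c^+4*P^+8) + (a*b^+2*c*P^+8) + (a*b^+2*c^+3*P^+8) + (a*b^+3*c^+2*P^+8) + (a*b^+3*c^+3*P^+7*Y2) + (a*b^+4*c^+2*P^+7*Y2) + (a*b^+4*c^+2*P^+7*Y1) + (a*b^+4*c^+2*P^+7*Y0) + (a^+2*b*c*P^+8) + (a^+2*b*c^+3*P^+8) + (a^+2*b*c^+4*P^+7*Y2) + (a^+2*b*c^+4*P^+7*Y1) + (a^+2*b*c^+4*P^+7*Y0) + (a^+2*b^+2*c^+2*P^+8) + (a^+2*b^+2*c^+3*P^+7*Y2) + (a^+2*b^+2*c^+3*P^+7*Y1) + (a^+2*b^+2*c^+3*P^+7*Y0) + (a^+2*b^+3*c^+2*P^+7*Y2) + (a^+2*b^+3*c^+2*P^+7*Y1) + (a^+2*b^+3*c^+2*P^+7*Y0) + (a^+3*b*c^+3*P^+7*Y0) + (a^+3*b^+2*c*P^+8) + (a^+3*b^+2*c^+2*P^+7*Y2) + (a^+3*b^+2*c^+2*P^+7*Y1) + (a^+3*b^+2*c^+2*P^+7*Y0) + (a^+3*b^+3*c*P^+7*Y1) + (a^+4*b^+2*c*P^+7*Y2) + (a^+4*b^+2*c*P^+7*Y1) + (a^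+4*b^+2*c*P^+7*Y0))).
ring.
Qed.
End Poly.

Section Sizes.
Variables a b c : {poly F2}.
Hypotheses (ha : ncst a) (hb : ncst b) (hc : ncst c).

Lemma ncst_e3 k : ncst (e3 a b c k).
Proof. by rewrite /e3 /eps3; case: ifP => _ //; case: ifP. Qed.

Lemma ncst_neq0 p : ncst p -> p != 0.
Proof. by rewrite /ncst -size_poly_gt0 => H; lia. Qed.

Lemma size_pw N : pw a b c N != 0 /\ (N < size (pw a b c N))%N.
Proof.
elim: N => [|N [H0 H1]]; first by rewrite /= oner_neq0 size_poly1.
have he := ncst_e3 N; have e0 := ncst_neq0 he.
rewrite pwS expr2; split; first by rewrite !mulf_neq0.
rewrite !size_mul ?mulf_neq0 //; rewrite /ncst in he.
move: he H1; set se := size _; set sp := size _; rewrite -!subn1; lia.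
Qed.

Lemma rw_neq0 N : (0 < N)%N -> rw a b c N != 0.
Proof.
case: N => // N _; elim: N => [|N IH]; first by rewrite rwS /= mulr0 add0r oner_neq0.
rewrite rwS; have he := ncst_e3 N.+1; have e0 := ncst_neq0 he.
have [p0 _] := size_pw N.+1.
have S : (1 < size (e3 a b c N.+1 * pw a b c N.+1 * rw a b c N.+1)%R)%N.
  rewrite (size_mul (mulf_neq0 e0 p0) IH) (size_mul e0 p0); rewrite /ncst in he.
  have : (0 < size (pw a b c N.+1))%N by rewrite size_poly_gt0.
  have : (0 < size (rw a b c N.+1))%N by rewrite size_poly_gt0.
  move: he; set se := size _; set sp := size (pw _ _ _ _); set sr := size (rw _ _ _ _).
  rewrite -!subn1; lia.
by rewrite -size_poly_gt0 size_addl ?size_poly1 //; lia.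
Qed.
End Sizes.

Unset Implicit Arguments.


Lemma F2_eq (x y : F2) : x + y = 0 -> x = y.
Proof. by move=> H; rewrite -[y]add0r -H -addrA addxx addr0. Qed.

Lemma vanish_agree f g V : vanish (ladd f g) V -> agree (V + 1) f g.
Proof. by move=> H k Hk; apply: F2_eq; apply: H; lia. Qed.

Lemma agree_trans M f g h : agree M f g -> agree M g h -> agree M f h.
Proof. by move=> H1 H2 k Hk; rewrite H1 ?H2. Qed.

Lemma agree_sym M f g : agree M f g -> agree M g f.
Proof. by move=> H k Hk; rewrite H. Qed.

Lemma lpoly_vanish p : vanish (lpoly p) (size p)%:Z.
Proof. by rewrite lpoly_shp; have := @shp_vanish p 0; rewrite add0r. Qed.

Lemma le00 : (0:int) <= 0. Proof. by []. Qed.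
Lemma size_ge0 (p : {poly F2}) : (0:int) <= (size p)%:Z. Proof. by []. Qed.

Lemma lone_vanish0 : vanish lone 0.
Proof. by move=> k Hk; rewrite /lone; case: eqP => // E; rewrite E in Hk. Qed.

Lemma vanS_exp (X : LS) n : vanish (lsv X) 0 -> vanish (lsv (X ^+ n)) 0.
Proof.
move=> V; elim: n => [|n IH]; first by rewrite expr0 lsv1; apply: lone_vanish0.
rewrite exprS lsvM; have := lmul_vanish (lsvP X) (lsvP _) V IH; by rewrite addr0.
Qed.

Lemma agS_mul (X X' Y Y' : LS) N1 N2 M : 0 <= N1 -> 0 <= N2 ->
  vanish (lsv X) N1 -> vanish (lsv X') N1 -> vanish (lsv Y) N2 -> vanish (lsv Y') N2 ->
  agree M (lsv X) (lsv X') -> agree M (lsv Y) (lsv Y') ->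
  agree (M + N1 + N2) (lsv (X * Y)) (lsv (X' * Y')).
Proof.
move=> P1 P2 V1 V2 V3 V4 A1 A2; rewrite !lsvM.
exact: (lmul_agree (lsvP X) (lsvP X') (lsvP Y) (lsvP Y') P1 P2 V1 V2 V3 V4 A1 A2).
Qed.

Lemma agS_exp (X X' : LS) n M : vanish (lsv X) 0 -> vanish (lsv X') 0 ->
  agree M (lsv X) (lsv X') -> agree M (lsv (X ^+ n)) (lsv (X' ^+ n)).
Proof.
move=> V1 V2 A; elim: n => [|n IH]; first by rewrite !expr0.
rewrite !exprS; have := agS_mul X X' _ _ 0 0 M le00 le00 V1 V2
   (vanS_exp X n V1) (vanS_exp X' n V2) A IH.
by rewrite !addr0.
Qed.

Lemma agS_add (X X' Y Y' : LS) M : agree M (lsv X) (lsv X') -> agree M (lsv Y) (lsv Y') ->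
  agree M (lsv (X + Y)) (lsv (X' + Y')).
Proof. by move=> A1 A2 k Hk; rewrite !lsvD /ladd A1 ?A2. Qed.

Lemma agS_LP (p : {poly F2}) (X X' : LS) M : vanish (lsv X) 0 -> vanish (lsv X') 0 ->
  agree M (lsv X) (lsv X') -> agree (M + (size p)%:Z) (lsv (LP p * X)) (lsv (LP p * X')).
Proof.
move=> V1 V2 A; have := agS_mul (LP p) (LP p) X X' (size p)%:Z 0 M (size_ge0 p) le00
  (lpoly_vanish p) (lpoly_vanish p) V1 V2 (@agree_refl M _) A.
by rewrite addr0; apply.
Qed.

Lemma lexpE (X : LS) n : lexp (lsv X) n = lsv (X ^+ n).
Proof. by elim: n => [|n IH] //=; rewrite IH exprS. Qed.

Lemma size_expE (P : {poly F2}) n : P != 0 -> size (P ^+ n) = ((size P).-1 * n).+1.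
Proof.
move=> P0; rewrite -size_exp prednK // size_poly_gt0; exact: expf_neq0.
Qed.

Lemma size_G3 (C1 C2 P : {poly F2}) : P != 0 ->
  (size (C1 * P ^+ 6 + C2 * P ^+ 4 + 1)%R <= size C1 + size C2 + (size P).-1 * 6 + 1)%N.
Proof.
move=> P0; have E6 := size_expE P 6 P0; have E4 := size_expE P 4 P0.
apply: (leq_trans (size_add _ _)); rewrite geq_max; apply/andP; split; last first.
  by rewrite size_poly1; lia.
apply: (leq_trans (size_add _ _)); rewrite geq_max; apply/andP; split.
  apply: (leq_trans (size_mul_leq _ _)); rewrite E6 -!subn1; lia.
apply: (leq_trans (size_mul_leq _ _)); rewrite E4 -!subn1; lia.
Qed.

Lemma LP_G (r P A B0 B1 B2 : {poly F2}) :
  LP (r^+8 + (A * P^+8 + (B0 * r * P^+7 + (B1 * r^+2 * P^+6 + B2 * r^+4 * P^+4))))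
  = LP r ^+ 8 + (LP A * LP P ^+ 8 + (LP B0 * LP r * LP P ^+ 7 +
      (LP B1 * LP r ^+ 2 * LP P ^+ 6 + LP B2 * LP r ^+ 4 * LP P ^+ 4))).
Proof.
rewrite !LPD (LPM A) (LPM (B0 * r)) (LPM B0) (LPM (B1 * r ^+ 2)) (LPM B1).
by rewrite (LPM (B2 * r ^+ 4)) (LPM B2) !LPX.
Qed.

Lemma IPX (q : {poly F2}) n : q != 0 -> IP (q ^+ n) = IP q ^+ n.
Proof.
move=> q0; apply: (@LS_inv_unique (LP (q ^+ n))); first by rewrite LP_IP // expf_neq0.
by rewrite LPX -exprMn LP_IP // expr1n.
Qed.

Section Main.
Variables a b c : {poly F2}.
Hypotheses (ha : ncst a) (hb : ncst b) (hc : ncst c).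

Definition sw i := sword 0 (eps3 a b c) i.
Definition sF i := lpoly (sw i).
Definition cf n := cf_fin sF n.

Lemma ncst_sw i : ncst (sw i).
Proof. by apply: (@sword_in _ 0 (eps3 a b c) (fun x => ncst x)) => k; apply: ncst_e3. Qed.

Definition pre n := map sw (iota 0 n.+1).

Lemma pre_all n : all ncst (pre n).
Proof. by apply/allP => x /mapP [i _ ->]; apply: ncst_sw. Qed.

Lemma preS n : pre n.+1 = pre n ++ [:: sw n.+1].
Proof. by rewrite /pre -[n.+2]addn1 iotaD map_cat. Qed.

Lemma cf_FR n : cf n = lsv (FR (m11 (mat (pre n))) (m21 (mat (pre n)))).
Proof.
rewrite /cf /cf_fin.
have -> : [seq sF i | i <- iota 0 n] = map lpoly (map sw (iota 0 n)) by rewrite -map_comp.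
have -> : pre n = rcons (map sw (iota 0 n)) (sw n).
  by rewrite /pre -[n.+1]addn1 iotaD map_cat cats1.
rewrite -cf_mat //.
have := pre_all n; by rewrite /pre -[n.+1]addn1 iotaD map_cat cats1.
Qed.

Definition PP n := m11 (mat (pre n)).
Definition QQ n := m21 (mat (pre n)).

Lemma QQ_size n : (n < size (QQ n))%N.
Proof.
rewrite /QQ /pre (iotaD 0 1 n) map_cat.
have -> : [seq sw i | i <- iota 0 1] ++ map sw (iota 1 n) = sw 0 :: map sw (iota 1 n) by [].
rewrite mat_cons.
have -> : forall a b c d, m21 (M22 a b c d) = c by [].
have H : all ncst (map sw (iota 1 n)).
  by apply/allP => x /mapP [i _ ->]; apply: ncst_sw.
have [_ H2] := mat_size H; by rewrite size_map size_iota in H2.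
Qed.

Lemma QQ_neq0 n : QQ n != 0.
Proof. by rewrite -size_poly_gt0; have := QQ_size n; lia. Qed.

Lemma PP_neq0 n : PP n != 0.
Proof. exact: m11_neq0 (pre_all n). Qed.

Lemma det_step n : PP n.+1 * QQ n + PP n * QQ n.+1 = 1.
Proof.
rewrite /PP /QQ preS mat_cat.
have -> : mat [:: sw n.+1] = mE (sw n.+1) by rewrite /= mmulr1.
have D := mat_det (pre n).
case: (mat (pre n)) D => m1 m2 m3 m4; rewrite /mdet /mmul /= => D.
apply: (@pchar2 _ _ (m1 * m3 * sw n.+1 + m2 * m3)).
apply: (@eq_mod _ _ (m1 * m4 - m2 * m3 - 1)); first ring.
by rewrite D subrr.
Qed.

Lemma cf_step n : agree (- (2 * n)%N%:Z) (cf n.+1) (cf n).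
Proof.
rewrite !cf_FR -/(PP n) -/(QQ n) -/(PP n.+1) -/(QQ n.+1).
have V : vanish (ladd (lsv (FR (PP n.+1) (QQ n.+1))) (lsv (FR (PP n) (QQ n)))) (- (2 * n)%N%:Z - 1).
  rewrite -lsvD FRD ?QQ_neq0 // det_step /FR LP1 mul1r.
  apply: (vanish_le (IP_vanish (mulf_neq0 (QQ_neq0 n.+1) (QQ_neq0 n)))).
  rewrite size_mul ?QQ_neq0 //.
  have := QQ_size n; have := QQ_size n.+1.
  set s1 := size (QQ n.+1); set s2 := size (QQ n); rewrite -subn1; lia.
by have := vanish_agree _ _ _ V; rewrite subrK.
Qed.

Lemma cf_agree n d : agree (- (2 * n)%N%:Z) (cf (n + d)) (cf n).
Proof.
elim: d => [|d IH]; first by rewrite addn0.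
apply: agree_trans IH; rewrite addnS => k Hk; rewrite (cf_step (n + d)) //; lia.
Qed.

Lemma cf_agree2 m n : (n <= m)%N -> agree (- (2 * n)%N%:Z) (cf m) (cf n).
Proof. by move=> H; rewrite -(subnKC H); apply: cf_agree. Qed.

Lemma cf0 : cf 0 = sF 0. Proof. by []. Qed.

Definition xL : laurent := fun k => cf (absz k) k.

Lemma xL_lcvg : lcvg cf xL.
Proof.
move=> M; exists (absz M) => n Hn k Hk; rewrite /xL.
have [H|H] := leqP (absz k) n.
  by rewrite (cf_agree2 _ _ H) //; lia.
by rewrite -(cf_agree2 _ _ (ltnW H)) //; lia.
Qed.

Lemma xL_laurent : is_laurent xL.
Proof.
exists (size (sw 0))%:Z => k Hk; rewrite /xL (cf_agree2 _ _ (leq0n _)); last by lia.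
by rewrite cf0 /sF lpoly_vanish.
Qed.

Lemma pw_neq0 N : pw a b c N != 0. Proof. exact: (proj1 (size_pw ha hb hc N)). Qed.

Lemma pre_W N : pre (2 ^ N.+1 - 2) = Wword (eps3 a b c) N.+1.
Proof.
have E := @map_sword _ 0 (eps3 a b c) N.+1; rewrite size_W in E.
rewrite -[RHS]E /pre.
have -> : (2 ^ N.+1 - 2).+1 = (2 ^ N.+1 - 1)%N.
  by rewrite expnS; have := expn_gt0 2 N; set t := (2 ^ N)%N; lia.
by [].
Qed.

Lemma cf_W N : cf (2 ^ N.+1 - 2) = lsv (FR (pw a b c N.+1) (rw a b c N.+1)).
Proof.
rewrite cf_FR pre_W.
have := mat_W a b c N.+1; rewrite /e3 => ->.
by [].
Qed.

Definition bt N := FR (rw a b c N) (pw a b c N).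

Lemma bt_step N : agree (- N%:Z) (lsv (bt N.+1)) (lsv (bt N)).
Proof.
have p0 := pw_neq0 N; have p1 := pw_neq0 N.+1.
have V : vanish (ladd (lsv (bt N.+1)) (lsv (bt N))) (- N%:Z - 1).
  rewrite -lsvD /bt FRD //.
  have -> : rw a b c N.+1 * pw a b c N + rw a b c N * pw a b c N.+1 = 1 * pw a b c N.
    rewrite rwS pwS; apply: (@pchar2 _ _ (e3 a b c N * pw a b c N ^+ 2 * rw a b c N)); ring.
  rewrite FR_cancel // /FR LP1 mul1r.
  apply: (vanish_le (IP_vanish p1)).
  have := (proj2 (size_pw ha hb hc N.+1)); set sp := size _; lia.
by have := vanish_agree _ _ _ V; rewrite subrK.
Qed.

Lemma bt_agree N d : agree (- N%:Z) (lsv (bt (N + d))) (lsv (bt N)).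
Proof.
elim: d => [|d IH]; first by rewrite addn0.
apply: agree_trans IH; rewrite addnS => k Hk; rewrite (bt_step (N + d)) //; lia.
Qed.

Lemma bt_agree2 m n : (n <= m)%N -> agree (- n%:Z) (lsv (bt m)) (lsv (bt n)).
Proof. by move=> H; rewrite -(subnKC H); apply: bt_agree. Qed.

Lemma bt0 : lsv (bt 0) = lzero.
Proof. by rewrite /bt (_ : rw a b c 0 = 0) // /FR LP0 mul0r. Qed.

Lemma bt_vanish N : vanish (lsv (bt N)) 0.
Proof. by move=> k Hk; rewrite (bt_agree2 N 0 (leq0n _)) ?bt0 //; lia. Qed.

Definition zL : laurent := fun k => lsv (bt (absz k)) k.

Lemma z_agree N : agree (- N%:Z) zL (lsv (bt N)).
Proof.
move=> k Hk; rewrite /zL.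
have [H|H] := leqP N (absz k); first by rewrite (bt_agree2 _ _ H).
by rewrite (bt_agree2 _ _ (ltnW H)) //; lia.
Qed.

Lemma z_vanish : vanish zL 0.
Proof. by move=> k Hk; rewrite /zL bt_vanish. Qed.

Lemma zL_laurent : is_laurent zL.
Proof. by exists 0; apply: z_vanish. Qed.

Lemma x_agree x : lcvg cf x -> forall n, agree (- (2 * n)%N%:Z) x (cf n).
Proof.
move=> Hx n k Hk; have [n0 Hn0] := Hx k.
rewrite -(Hn0 (n0 + n)%N) ?leq_addr //.
by rewrite (cf_agree2 _ _ (leq_addl n0 n)).
Qed.

Lemma xz x : is_laurent x -> lcvg cf x -> lmul x zL = lone.
Proof.
move=> Lx Hx; apply: functional_extensionality => k.
pose Bx : int := (absz (bnd x))%:Z + 2.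
have Vx : vanish x Bx by apply: (vanish_le (bndP Lx)); rewrite /Bx; lia.
pose N := (absz k + absz Bx)%N.
pose m := (2 ^ N.+1 - 2)%N.
have Hm : (N <= m)%N.
  rewrite /m; have := ltn_expl N.+1 (ltnSn 1); set t := (2 ^ N.+1)%N; lia.
have Ax : agree (- N%:Z) x (cf m).
  by move=> k' Hk'; apply: (x_agree x Hx m); lia.
have Vg : vanish (cf m) Bx.
  by move=> k' Hk'; rewrite -Ax ?Vx //; rewrite /Bx in Hk'; lia.
have Az : agree (- N%:Z) zL (lsv (bt N.+1)).
  by move=> k' Hk'; apply: z_agree; lia.
have Lg : is_laurent (cf m) by rewrite /m cf_W; apply: lsvP.
have P1 : 0 <= Bx by rewrite /Bx; lia.
have E := lmul_agree Lx Lg zL_laurent (lsvP _) P1 le00 Vx Vg z_vanish (bt_vanish _) Ax Az.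
rewrite E; last by rewrite /N /Bx; lia.
by rewrite /m cf_W -lsvM /bt FR_inv ?pw_neq0 //; apply: rw_neq0.
Qed.

Lemma bt_ident K : let P := pw a b c (3 * K) in
  bt (3 * K) ^+ 8 + (LP (cA a b c) + (LP (cB0 a b c) * bt (3 * K) +
     (LP (cB1 a b c) * bt (3 * K) ^+ 2 + LP (cB2 a b c) * bt (3 * K) ^+ 4)))
  = LP (cC1 a b c * P ^+ 6 + cC2 a b c * P ^+ 4 + 1) * IP (P ^+ 8).
Proof.
move=> P; have := G_id a b c K; rewrite -/P; set r := rw a b c (3 * K) => <-.
rewrite IPX ?pw_neq0 // /bt /FR -/r -/P.
have u := LP_IP (pw_neq0 (3 * K)); rewrite -/P in u.
rewrite LP_G.
set t := LP P in u *; set i := IP P in u *; set R := LP r.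
set A := LP (cA a b c); set B0 := LP (cB0 a b c); set B1 := LP (cB1 a b c); set B2 := LP (cB2 a b c).
have -> : (R ^+ 8 + (A * t ^+ 8 + (B0 * R * t ^+ 7 + (B1 * R ^+ 2 * t ^+ 6 + B2 * R ^+ 4 * t ^+ 4)))) * i ^+ 8
  = (R * i) ^+ 8 + (A * (t * i) ^+ 8 + (B0 * (R * i) * (t * i) ^+ 7 +
      (B1 * (R * i) ^+ 2 * (t * i) ^+ 6 + B2 * (R * i) ^+ 4 * (t * i) ^+ 4))) by ring.
by rewrite u !expr1n !mulr1.
Qed.

Lemma final x : is_laurent x -> lcvg cf x ->
  lexp (linv x) 8 = ladd (lpoly (cA a b c)) (ladd (lmul (lpoly (cB0 a b c)) (linv x))
     (ladd (lmul (lpoly (cB1 a b c)) (lexp (linv x) 2)) (lmul (lpoly (cB2 a b c)) (lexp (linv x) 4)))).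
Proof.
move=> Lx Hx.
rewrite (linvE Lx zL_laurent (xz x Lx Hx)).
pose Z : LS := LSmk zL_laurent.
change zL with (lsv Z).
rewrite !lexpE.
change (lpoly (cA a b c)) with (lsv (LP (cA a b c))).
change (lpoly (cB0 a b c)) with (lsv (LP (cB0 a b c))).
change (lpoly (cB1 a b c)) with (lsv (LP (cB1 a b c))).
change (lpoly (cB2 a b c)) with (lsv (LP (cB2 a b c))).
rewrite -!lsvM -!lsvD.
apply: functional_extensionality => k.
pose CB := (size (cA a b c) + size (cB0 a b c) + size (cB1 a b c) + size (cB2 a b c))%N.
pose sC := (size (cC1 a b c) + size (cC2 a b c))%N.
pose K := (absz k + CB + sC + 2)%N.
pose bK := bt (3 * K).
have AZ : agree (- (3 * K)%N%:Z) (lsv Z) (lsv bK) := z_agree (3 * K).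
have VZ : vanish (lsv Z) 0 := z_vanish.
have VB : vanish (lsv bK) 0 := bt_vanish _.
have A8 := agS_exp Z bK 8 _ VZ VB AZ.
have A2 := agS_exp Z bK 2 _ VZ VB AZ.
have A4 := agS_exp Z bK 4 _ VZ VB AZ.
have AR : agree (- (3 * K)%N%:Z + CB%:Z)
   (lsv (LP (cA a b c) + (LP (cB0 a b c) * Z + (LP (cB1 a b c) * Z ^+ 2 + LP (cB2 a b c) * Z ^+ 4))))
   (lsv (LP (cA a b c) + (LP (cB0 a b c) * bK + (LP (cB1 a b c) * bK ^+ 2 + LP (cB2 a b c) * bK ^+ 4)))).
  apply: agS_add; first by [].
  apply: agS_add.
    move=> k' Hk'; apply: (agS_LP _ _ _ _ VZ VB AZ); rewrite /CB in Hk'; lia.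
  apply: agS_add.
    move=> k' Hk'; apply: (agS_LP _ _ _ _ (vanS_exp _ _ VZ) (vanS_exp _ _ VB) A2); rewrite /CB in Hk'; lia.
  move=> k' Hk'; apply: (agS_LP _ _ _ _ (vanS_exp _ _ VZ) (vanS_exp _ _ VB) A4); rewrite /CB in Hk'; lia.
have P0 := pw_neq0 (3 * K).
have SP := proj2 (size_pw ha hb hc (3 * K)).
set P := pw a b c (3 * K) in P0 SP.
have V : vanish (ladd (lsv (bK ^+ 8)) (lsv (LP (cA a b c) + (LP (cB0 a b c) * bK +
     (LP (cB1 a b c) * bK ^+ 2 + LP (cB2 a b c) * bK ^+ 4)))))
     ((size (cC1 a b c * P ^+ 6 + cC2 a b c * P ^+ 4 + 1))%:Z + (1 - (size (P ^+ 8))%:Z)).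
  rewrite -lsvD /bK bt_ident -/P lsvM.
  apply: (lmul_vanish (lpoly_laurent _) (lsvP _) (lpoly_vanish _)).
  apply: IP_vanish; exact: expf_neq0.
have AI := vanish_agree _ _ _ V.
have SG := size_G3 (cC1 a b c) (cC2 a b c) P P0.
have S8 := size_expE P 8 P0.
rewrite A8; last by rewrite /K; lia.
rewrite AI; last first.
  move: SG SP; rewrite S8 /K /sC; set sG := size (cC1 a b c * P ^+ 6 + cC2 a b c * P ^+ 4 + 1)%R; set sP := size P.
  rewrite -!subn1; lia.
by rewrite -AR //; rewrite /K; lia.
Qed.

End Main.

Theorem mainTheorem5 (a b c : {poly F2}) :
  (1 < size a)%N -> (1 < size b)%N -> (1 < size c)%N ->
  let s := fun i => lpoly (sword 0 (eps3 a b c) i) in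
  let A := a^+3*b^+2*c + a^+2*b^+2*c^+2 + a*b^+3*c^+2 + b^+4*c^+2 + a*b^+2*c^+3
           + a*b*c^+4 + a^+2*b*c + a*b^+2*c + a*b*c^+2 + c^+4 + 1 in
  let B0 := a^+4*b^+2*c + a^+3*b^+2*c^+2 + a^+2*b^+3*c^+2 + a*b^+4*c^+2
            + a^+2*b^+2*c^+3 + a^+2*b*c^+4 in
  let B1 := a^+3*b^+2*c + a^+2*b^+2*c^+2 + a*b^+3*c^+2 + a^+2*b*c^+3 in
  let B2 := a^+2*b*c + a*b^+2*c + a*b*c^+2 in
  (exists x, is_laurent x /\ lcvg (cf_fin s) x) /\
  (forall x, is_laurent x -> lcvg (cf_fin s) x ->
     let beta := linv x in
     lexp beta 8 =
       ladd (lpoly A)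
         (ladd (lmul (lpoly B0) beta)
            (ladd (lmul (lpoly B1) (lexp beta 2)) (lmul (lpoly B2) (lexp beta 4))))).
Proof.
move=> ha hb hc s A B0 B1 B2.
split.
  exists (xL a b c); split; [exact: xL_laurent | exact: xL_lcvg].
move=> x Lx Hx beta.
exact: (final a b c ha hb hc x Lx Hx).
Qed.
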